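(* Let $(X,d)$ be a complete metric space and $I:X\to(-\infty,0]$ a function of Baire class 1. Let $X_0$ be a nonempty dense subset of $X$ with the following property: for every $\beta<0$ there exists $\alpha(\beta)>0$ such that for every $x\in X_0$ with $I(x)<\beta$ there exists a sequence $\{x_n\}\subseteq X_0$ with $x_n\to x$ in $(X,d)$ and $\liminf_{n\to\infty}I(x_n)\ge I(x)+\alpha(\beta)$. Then there exists a residual set $S\subseteq X$ such that $I(x)=0$ for all $x\in S$.
   Context: A function is of Baire class 1 if it is a pointwise limit of a sequence of continuous functions. A set is residual if its complement is of first category (a countable union of nowhere dense sets). *)

(* Defs.v *)
From Stdlib Require Export Reals.
Open Scope R_scope.

Section MetricDefs.
Variable M : Metric_Space.
Local Notation X := (Base M).
Local Notation d := (dist M).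

Definition seq_cv (x : nat -> X) (l : X) : Prop :=
  forall eps : R, eps > 0 -> exists N : nat, forall n : nat, (n >= N)%nat -> d (x n) l < eps.

Definition seq_Cauchy (x : nat -> X) : Prop :=
  forall eps : R, eps > 0 -> exists N : nat,
    forall n m : nat, (n >= N)%nat -> (m >= N)%nat -> d (x n) (x m) < eps.

Definition complete : Prop :=
  forall x : nat -> X, seq_Cauchy x -> exists l : X, seq_cv x l.

Definition continuous_on_X (f : X -> R) : Prop :=
  forall x : X, forall eps : R, eps > 0 -> exists delta : R, delta > 0 /\
    forall y : X, d x y < delta -> Rabs (f y - f x) < eps.

Definition baire_class1 (f : X -> R) : Prop :=
  exists g : nat -> X -> R,
    (forall n, continuous_on_X (g n)) /\
    (forall x : X, Un_cv (fun n => g n x) (f x)).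

Definition closure (A : X -> Prop) : X -> Prop :=
  fun x => forall eps : R, eps > 0 -> exists y : X, A y /\ d x y < eps.

Definition interior (A : X -> Prop) : X -> Prop :=
  fun x => exists eps : R, eps > 0 /\ forall y : X, d x y < eps -> A y.

Definition dense (A : X -> Prop) : Prop := forall x : X, closure A x.

Definition nowhere_dense (A : X -> Prop) : Prop :=
  forall x : X, ~ interior (closure A) x.

Definition first_category (A : X -> Prop) : Prop :=
  exists B : nat -> X -> Prop,
    (forall n, nowhere_dense (B n)) /\
    (forall x : X, A x <-> exists n, B n x).

Definition residual (S : X -> Prop) : Prop :=
  first_category (fun x => ~ S x).

End MetricDefs.

(* liminf_{n->oo} u n >= c  (liminf taken in the extended reals) *)
Definition liminf_ge (u : nat -> R) (c : R) : Prop :=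
  forall c' : R, c' < c -> exists N : nat, forall n : nat, (n >= N)%nat -> u n > c'.

(* Main.v *)
Require Import Defs.
From Stdlib Require Import Reals Lra Lia Cantor SplitAbsolu.
Open Scope R_scope.

Definition Fset (M : Metric_Space) (g : nat -> Base M -> R) (e : R) (n : nat)
  (x : Base M) : Prop :=
  forall m k, (m >= n)%nat -> (k >= n)%nat -> Rabs (g m x - g k x) <= e.

Lemma Fset_closed M g e n :
  (forall m, continuous_on_X M (g m)) ->
  forall x, Defs.closure M (Fset M g e n) x -> Fset M g e n x.
Proof.
  intros Hc x Hx m k Hm Hk.
  apply Rnot_lt_le; intro H.
  set (eta := Rabs (g m x - g k x) - e).
  assert (Heta : eta / 2 > 0) by (unfold eta; lra).
  destruct (Hc m x _ Heta) as [d1 [Hd1 H1]].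
  destruct (Hc k x _ Heta) as [d2 [Hd2 H2]].
  destruct (Hx (Rmin d1 d2)) as [y [Fy Hy]].
  { apply Rmin_pos; lra. }
  assert (A1 := H1 y (Rlt_le_trans _ _ _ Hy (Rmin_l _ _))).
  assert (A2 := H2 y (Rlt_le_trans _ _ _ Hy (Rmin_r _ _))).
  assert (A3 := Fy m k Hm Hk).
  unfold eta in *. split_Rabs; lra.
Qed.

Lemma bd_nowhere M (F : Base M -> Prop) :
  (forall x, Defs.closure M F x -> F x) ->
  nowhere_dense M (fun x => F x /\ ~ Defs.interior M F x).
Proof.
  intros HF x [r [Hr Hball]].
  assert (Hx : Defs.closure M (fun x => F x /\ ~ Defs.interior M F x) x).
  { apply Hball. assert (dist M x x = 0) by (apply dist_refl; reflexivity). lra. }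
  destruct (Hx r Hr) as [y [[Fy Ny] Hy]].
  apply Ny. exists (r - dist M x y). split; [lra|].
  intros z Hz. apply HF. intros eps Heps.
  assert (Hxz : dist M x z < r).
  { pose proof (dist_tri M x z y). pose proof (dist_sym M z y). lra. }
  destruct (Hball z Hxz eps Heps) as [w [[Fw _] Hw]].
  exists w; auto.
Qed.

Theorem lemma4p2 (M : Metric_Space) (I : Base M -> R) (X0 : Base M -> Prop) :
  complete M ->
  (forall x : Base M, I x <= 0) ->
  baire_class1 M I ->
  (exists x0 : Base M, X0 x0) ->
  dense M X0 ->
  (forall beta : R, beta < 0 ->
     exists alpha : R, alpha > 0 /\
       forall x : Base M, X0 x -> I x < beta ->
         exists xs : nat -> Base M,
           (forall n, X0 (xs n)) /\ seq_cv M xs x /\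
           liminf_ge (fun n => I (xs n)) (I x + alpha)) ->
  exists S : Base M -> Prop, residual M S /\ forall x : Base M, S x -> I x = 0.
Proof.
  intros _ Hle [g [Hc Hlim]] _ Hdense Hprop.
  set (A := fun j n x => Fset M g (/ INR j) n x /\ ~ Defs.interior M (Fset M g (/ INR j) n) x).
  exists (fun x => I x = 0). split; [|auto].
  exists (fun N x => A (fst (of_nat N)) (snd (of_nat N)) x /\ I x <> 0).
  split.
  - intros N z Hz. apply (bd_nowhere M (Fset M g (/ INR (fst (of_nat N))) (snd (of_nat N)))
      (Fset_closed M g _ _ Hc) z).
    destruct Hz as [r [Hr Hb]]. exists r. split; auto.
    intros y Hy eps Heps. destruct (Hb y Hy eps Heps) as [w [[Aw _] Hw]].
    exists w. auto.
  - intros x. split; [|intros [N [_ H]]; exact H].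
    intro Hx0.
    assert (Hneg : I x < 0) by (pose proof (Hle x); lra).
    destruct (Hprop (I x / 2) ltac:(lra)) as [alpha [Ha Hal]].
    assert (Hpos : 0 < Rmin alpha (- I x) / 10).
    { assert (0 < Rmin alpha (- I x)) by (apply Rmin_pos; lra). lra. }
    destruct (archimed_cor1 _ Hpos) as [j [Hj Hj0]].
    set (e := / INR j).
    assert (He : 0 < e) by (unfold e; apply Rinv_0_lt_compat, lt_0_INR; lia).
    assert (He1 : 10 * e < alpha) by
      (pose proof (Rmin_l alpha (- I x)); unfold e; lra).
    assert (He2 : 10 * e < - I x) by
      (pose proof (Rmin_r alpha (- I x)); unfold e; lra).
    destruct (Hlim x (e / 2) ltac:(lra)) as [n Hn].
    assert (Fx : Fset M g e n x).
    { intros m k Hm Hk. pose proof (Hn m Hm). pose proof (Hn k Hk).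
      unfold R_dist in *. split_Rabs; lra. }
    exists (to_nat (j, n)). rewrite cancel_of_to. simpl. split; [|exact Hx0].
    split; [exact Fx|].
    intros [r [Hr Hball]].
    destruct (Hc n x e He) as [dl [Hdl Hcont]].
    set (rho := Rmin r dl).
    assert (Hrho : rho > 0) by (apply Rmin_pos; lra).
    assert (Key : forall y, dist M x y < rho -> Rabs (I y - I x) < 5 * e).
    { intros y Hy.
      assert (Fy : Fset M g e n y) by (apply Hball; pose proof (Rmin_l r dl); unfold rho in *; lra).
      assert (C := Hcont y ltac:(pose proof (Rmin_r r dl); unfold rho in *; lra)).
      destruct (Hlim y e He) as [m0 Hm0].
      assert (H1 := Hm0 (max m0 n) ltac:(lia)).
      assert (H2 := Fy (max m0 n) n ltac:(lia) ltac:(lia)).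
      assert (H3 := Hn n ltac:(lia)).
      unfold R_dist in *. split_Rabs; lra. }
    destruct (Hdense x rho Hrho) as [y [X0y Hy]].
    assert (Ky := Key y Hy).
    destruct (Hal y X0y ltac:(split_Rabs; lra)) as [xs [_ [Hcv Hli]]].
    destruct (Hcv (rho - dist M x y) ltac:(lra)) as [N1 HN1].
    destruct (Hli (I x + 5 * e) ltac:(split_Rabs; lra)) as [N2 HN2].
    assert (D1 := HN1 (max N1 N2) ltac:(lia)).
    assert (D2 := HN2 (max N1 N2) ltac:(lia)).
    assert (Hd : dist M x (xs (max N1 N2)) < rho).
    { pose proof (dist_tri M x (xs (max N1 N2)) y).
      rewrite (dist_sym M (xs (max N1 N2)) y) in D1. lra. }
    assert (K2 := Key _ Hd).
    simpl in D2. split_Rabs; lra.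
Qed.
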